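(* Let $N\ge1$, $h\in(0,1)$, $\varepsilon\in(0,1/2]$, and let $\Phi$ be the opinion operator defined in the context. Then for every $V^0\in[-1,1]^N$ with nondecreasing components, the sequence $\Phi^n(V^0)$ converges as $n\to\infty$ to a fixed point of $\Phi$.
   Context: For $V=(v_1,\dots,v_N)\in[-1,1]^N$ and each $k$, let $J(v_k)=\{l\in\{1,\dots,N\}:|v_l-v_k|\le\varepsilon\}$ and $I(v_k)=|J(v_k)|$. Put $w_k(V)=v_k+\frac{h}{I(v_k)}\sum_{l\in J(v_k)}v_l$. Then $\Phi(V)=(v_1',\dots,v_N')$ where $v_k'=-1$ if $w_k<-1$, $v_k'=1$ if $w_k>1$, and $v_k'=w_k$ if $|w_k|\le1$. *)

(* Defs.v *)
(* Opinion vectors V in [-1,1]^N are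
   represented as functions V : nat -> R, with components V 0, ..., V (N-1)
   (0-based indexing of the paper's v_1..v_N); values at indices >= N are
   irrelevant, and Phi sets them to 0. *)
From Stdlib Require Import Reals List.
Open Scope R_scope.

Definition Jset (N : nat) (eps : R) (V : nat -> R) (k : nat) : list nat :=
  filter (fun l => if Rle_dec (Rabs (V l - V k)) eps then true else false)
         (seq 0 N).

Definition Icard (N : nat) (eps : R) (V : nat -> R) (k : nat) : nat :=
  length (Jset N eps V k).

Definition w (N : nat) (h eps : R) (V : nat -> R) (k : nat) : R :=
  V k + h / INR (Icard N eps V k)
        * fold_right Rplus 0 (map V (Jset N eps V k)).

Definition clip (x : R) : R :=
  if Rlt_dec x (-1) then -1 else if Rlt_dec 1 x then 1 else x.

Definition Phi (N : nat) (h eps : R) (V : nat -> R) : nat -> R :=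
  fun k => if Nat.ltb k N then clip (w N h eps V k) else 0.

Definition in_cube (N : nat) (V : nat -> R) : Prop :=
  forall k, (k < N)%nat -> -1 <= V k <= 1.

Definition nondecreasing_vec (N : nat) (V : nat -> R) : Prop :=
  forall i j, (i <= j < N)%nat -> V i <= V j.

(* Main.v *)
Require Import Defs.
From Stdlib Require Import Reals List Lra Lia Classical FunctionalExtensionality ZArith.
Open Scope R_scope.

Fixpoint sumN (n : nat) (f : nat -> R) : R :=
  match n with O => 0 | S n' => sumN n' f + f n' end.

Lemma sumN_ext n f g : (forall i, (i < n)%nat -> f i = g i) -> sumN n f = sumN n g.
Proof. induction n; simpl; intros H; [reflexivity|]. rewrite IHn by (intros; apply H; lia). rewrite H by lia. reflexivity. Qed.

Lemma sumN_plus n f g : sumN n (fun i => f i + g i) = sumN n f + sumN n g.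
Proof. induction n; simpl; [ring|]. rewrite IHn; ring. Qed.

Lemma sumN_minus n f g : sumN n (fun i => f i - g i) = sumN n f - sumN n g.
Proof. induction n; simpl; [ring|]. rewrite IHn; ring. Qed.

Lemma sumN_scal n c f : sumN n (fun i => c * f i) = c * sumN n f.
Proof. induction n; simpl; [ring|]. rewrite IHn; ring. Qed.

Lemma sumN_scar n c f : sumN n (fun i => f i * c) = sumN n f * c.
Proof. induction n; simpl; [ring|]. rewrite IHn; ring. Qed.

Lemma sumN_le n f g : (forall i, (i < n)%nat -> f i <= g i) -> sumN n f <= sumN n g.
Proof. induction n; simpl; intros H; [lra|]. assert (f n <= g n) by (apply H; lia).
 assert (sumN n f <= sumN n g) by (apply IHn; intros; apply H; lia). lra. Qed.

Lemma sumN_nonneg n f : (forall i, (i < n)%nat -> 0 <= f i) -> 0 <= sumN n f.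
Proof. intros H. replace 0 with (sumN n (fun _ => 0)). apply sumN_le; auto.
 clear H; induction n; simpl; [auto| rewrite IHn; ring]. Qed.

Lemma sumN_const n c : sumN n (fun _ => c) = INR n * c.
Proof. induction n; simpl sumN; [simpl; ring|]. rewrite IHn, S_INR; ring. Qed.

Lemma sumN_term n f k : (forall i, (i < n)%nat -> 0 <= f i) -> (k < n)%nat -> f k <= sumN n f.
Proof. induction n; intros H Hk; [lia|]. simpl.
 destruct (Nat.eq_dec k n) as [->|Hne].
 - assert (0 <= sumN n f) by (apply sumN_nonneg; intros; apply H; lia). lra.
 - assert (f k <= sumN n f) by (apply IHn; [intros; apply H; lia| lia]).
   assert (0 <= f n) by (apply H; lia). lra. Qed.

Lemma sumN_swap n m (g : nat -> nat -> R) :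
  sumN n (fun i => sumN m (fun j => g i j)) = sumN m (fun j => sumN n (fun i => g i j)).
Proof. induction n; simpl.
 - rewrite sumN_const; ring.
 - rewrite IHn. rewrite <- sumN_plus. reflexivity. Qed.

Definition ind (b : bool) : R := if b then 1 else 0.

Lemma ind_01 b : 0 <= ind b <= 1.
Proof. destruct b; simpl; lra. Qed.

Lemma fold_right_Rplus_acc (l : list R) a : fold_right Rplus a l = fold_right Rplus 0 l + a.
Proof. induction l; simpl; [ring|]. rewrite IHl; ring. Qed.

Lemma fold_filter_sumN n (P : nat -> bool) (f : nat -> R) :
  fold_right Rplus 0 (map f (filter P (seq 0 n))) = sumN n (fun l => ind (P l) * f l).
Proof. induction n; [reflexivity|].
 rewrite seq_S, filter_app, map_app, fold_right_app. simpl sumN. rewrite <- IHn.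
 rewrite fold_right_Rplus_acc. f_equal. simpl. destruct (P n); simpl; ring. Qed.

Lemma length_filter_sumN n (P : nat -> bool) :
  INR (length (filter P (seq 0 n))) = sumN n (fun l => ind (P l)).
Proof. induction n; [reflexivity|].
 rewrite seq_S, filter_app, length_app, plus_INR. simpl sumN. rewrite <- IHn.
 f_equal. simpl. destruct (P n); simpl; ring. Qed.

Lemma pair_lemma n (P Q : nat -> bool) (f : nat -> R) :
  (forall l l', (l < n)%nat -> (l' < n)%nat -> P l = true -> Q l' = true ->
     ~ (P l' = true /\ Q l = true) -> f l' <= f l) ->
  sumN n (fun l => ind (Q l) * f l) * sumN n (fun l => ind (P l)) <=
  sumN n (fun l => ind (P l) * f l) * sumN n (fun l => ind (Q l)).
Proof.
  intros H.
  set (T := fun l l' => ind (P l) * ind (Q l') * (f l - f l')).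
  assert (HX : sumN n (fun l => sumN n (fun l' => T l l')) =
     sumN n (fun l => ind (P l) * f l) * sumN n (fun l => ind (Q l)) -
     sumN n (fun l => ind (Q l) * f l) * sumN n (fun l => ind (P l))).
  { unfold T. rewrite (Rmult_comm (sumN n (fun l => ind (Q l) * f l))).
    rewrite <- (sumN_scar n (sumN n (fun l => ind (Q l)))).
    rewrite <- (sumN_scar n (sumN n (fun l => ind (Q l) * f l))).
    rewrite <- sumN_minus. apply sumN_ext; intros l _.
    rewrite <- (sumN_scal n (ind (P l) * f l)). rewrite <- (sumN_scal n (ind (P l))).
    rewrite <- sumN_minus.
    apply sumN_ext; intros; ring. }
  assert (HS : sumN n (fun l => sumN n (fun l' => T l l')) = sumN n (fun l => sumN n (fun l' => T l' l)))
    by apply sumN_swap.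
  assert (HG : 0 <= sumN n (fun l => sumN n (fun l' => T l l' + T l' l))).
  { apply sumN_nonneg; intros l Hl. apply sumN_nonneg; intros l' Hl'. unfold T.
    destruct (P l) eqn:Pl, (Q l') eqn:Ql', (P l') eqn:Pl', (Q l) eqn:Ql; simpl;
    try (assert (f l' <= f l) by (apply H; auto; intros [? ?]; congruence));
    try (assert (f l <= f l') by (apply H; auto; intros [? ?]; congruence)); lra. }
  assert (sumN n (fun l => sumN n (fun l' => T l l' + T l' l)) =
      sumN n (fun l => sumN n (fun l' => T l l')) + sumN n (fun l => sumN n (fun l' => T l' l))).
  { rewrite <- sumN_plus. apply sumN_ext; intros. apply sumN_plus. }
  lra.
Qed.

Definition win (eps : R) (V : nat -> R) (x : R) : nat -> bool :=
  fun l => if Rle_dec (Rabs (V l - x)) eps then true else false.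
Definition Cw N eps V x := sumN N (fun l => ind (win eps V x l)).
Definition Sw N eps V x := sumN N (fun l => ind (win eps V x l) * V l).
Definition mean N eps V x := Sw N eps V x / Cw N eps V x.

Lemma w_eq N h eps V k : w N h eps V k = V k + h * mean N eps V (V k).
Proof. unfold w, Icard, mean, Cw, Sw.
 change (Jset N eps V k) with (filter (win eps V (V k)) (seq 0 N)).
 rewrite fold_filter_sumN, length_filter_sumN. unfold Rdiv; ring. Qed.

Lemma abs_le z e : Rabs z <= e -> -e <= z <= e.
Proof. unfold Rabs; destruct (Rcase_abs z); lra. Qed.
Lemma abs_nle z e : ~ Rabs z <= e -> z < -e \/ e < z.
Proof. unfold Rabs; destruct (Rcase_abs z); lra. Qed.
Lemma le_abs z e : -e <= z <= e -> Rabs z <= e.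
Proof. unfold Rabs; destruct (Rcase_abs z); lra. Qed.

Lemma win_true eps V x l : win eps V x l = true <-> x - eps <= V l <= x + eps.
Proof. unfold win; destruct (Rle_dec _ _) as [H|H]; split; intros; try congruence.
 - apply abs_le in H; lra.
 - exfalso; apply H, le_abs; lra. Qed.
Lemma win_false eps V x l : win eps V x l = false <-> V l < x - eps \/ x + eps < V l.
Proof. unfold win; destruct (Rle_dec _ _) as [H|H]; split; intros; try congruence.
 - apply abs_le in H; lra.
 - apply abs_nle in H; lra. Qed.

Lemma Cw_ge1 N eps V k : 0 <= eps -> (k < N)%nat -> 1 <= Cw N eps V (V k).
Proof. intros He Hk. unfold Cw.
 assert (ind (win eps V (V k) k) = 1).
 { assert (win eps V (V k) k = true) by (apply win_true; lra). rewrite H; reflexivity. }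
 rewrite <- H at 1. apply (sumN_term N (fun l => ind (win eps V (V k) l))); auto.
 intros; apply ind_01. Qed.

Lemma Cw_le N eps V x : Cw N eps V x <= INR N.
Proof. unfold Cw. rewrite <- (Rmult_1_r (INR N)), <- sumN_const. apply sumN_le; intros; apply ind_01. Qed.

Lemma div_le_cross a b c d : 0 < b -> 0 < d -> a * d <= c * b -> a / b <= c / d.
Proof. intros Hb Hd H.
 replace (a / b) with ((a * d) * / (b * d)) by (field; lra).
 replace (c / d) with ((c * b) * / (b * d)) by (field; lra).
 apply Rmult_le_compat_r; [|exact H]. left; apply Rinv_0_lt_compat; nra. Qed.

Lemma Sw_Cw_mono N eps V x y : x <= y ->
  Sw N eps V x * Cw N eps V y <= Sw N eps V y * Cw N eps V x.
Proof. intros Hxy. unfold Sw, Cw.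
 apply (pair_lemma N (win eps V y) (win eps V x) V).
 intros l l' _ _ H1 H2 H3. apply win_true in H1. apply win_true in H2.
 destruct (win eps V y l') eqn:E1.
 - destruct (win eps V x l) eqn:E2. + exfalso; auto.
   + apply win_false in E2; lra.
 - apply win_false in E1; lra. Qed.

Lemma mean_mono N eps V x y : 0 < Cw N eps V x -> 0 < Cw N eps V y -> x <= y ->
  mean N eps V x <= mean N eps V y.
Proof. intros. unfold mean. apply div_le_cross; auto. apply Sw_Cw_mono; auto. Qed.

Lemma mean_mono_k N eps V k l : 0 <= eps -> (k < N)%nat -> (l < N)%nat -> V k <= V l ->
  mean N eps V (V k) <= mean N eps V (V l).
Proof. intros. pose proof (Cw_ge1 N eps V k H H0). pose proof (Cw_ge1 N eps V l H H1).
 apply mean_mono; auto; lra. Qed.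

Lemma clip_mono x y : x <= y -> clip x <= clip y.
Proof. unfold clip; intros; repeat destruct Rlt_dec; lra. Qed.
Lemma clip_range x : -1 <= clip x <= 1.
Proof. unfold clip; repeat destruct Rlt_dec; lra. Qed.
Lemma clip_id x : -1 <= x <= 1 -> clip x = x.
Proof. unfold clip; intros; repeat destruct Rlt_dec; lra. Qed.
Lemma clip_open x : -1 < clip x < 1 -> clip x = x.
Proof. unfold clip; intros; repeat destruct Rlt_dec; lra. Qed.
Lemma clip_neg x : clip (- x) = - clip x.
Proof. unfold clip; repeat destruct Rlt_dec; lra. Qed.

Lemma Phi_lt N h eps V k : (k < N)%nat -> Phi N h eps V k = clip (V k + h * mean N eps V (V k)).
Proof. intros Hk. unfold Phi. replace (Nat.ltb k N) with true by (symmetry; apply Nat.ltb_lt; auto).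
 rewrite w_eq; reflexivity. Qed.

Lemma Phi_mono N h eps V k l : 0 <= h -> 0 <= eps -> (k < N)%nat -> (l < N)%nat -> V k <= V l ->
  Phi N h eps V k <= Phi N h eps V l.
Proof. intros. rewrite !Phi_lt by auto. apply clip_mono.
 pose proof (mean_mono_k N eps V k l). assert (h * mean N eps V (V k) <= h * mean N eps V (V l))
  by (apply Rmult_le_compat_l; auto). lra. Qed.

Lemma Phi_lt_inv N h eps V k l : 0 <= h -> 0 <= eps -> (k < N)%nat -> (l < N)%nat ->
  Phi N h eps V k < Phi N h eps V l -> V k < V l.
Proof. intros. destruct (Rlt_le_dec (V k) (V l)); auto.
 pose proof (Phi_mono N h eps V l k H H0 H2 H1 r); lra. Qed.

Lemma Phi_cube N h eps V k : (k < N)%nat -> -1 <= Phi N h eps V k <= 1.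
Proof. intros; rewrite Phi_lt by auto; apply clip_range. Qed.

Definition negV (V : nat -> R) : nat -> R := fun k => - V k.

Lemma win_neg eps V x : win eps (negV V) (- x) = win eps V x.
Proof. extensionality l. unfold win, negV.
 replace (- V l - - x) with (- (V l - x)) by ring. rewrite Rabs_Ropp. reflexivity. Qed.

Lemma mean_neg N eps V x : mean N eps (negV V) (- x) = - mean N eps V x.
Proof. unfold mean, Sw, Cw. rewrite win_neg. unfold negV.
 replace (sumN N (fun l => ind (win eps V x l) * - V l)) with (- sumN N (fun l => ind (win eps V x l) * V l)).
 - unfold Rdiv; ring.
 - rewrite <- (Rmult_1_l (sumN _ _)). rewrite Ropp_mult_distr_l, <- sumN_scal. apply sumN_ext; intros; ring. Qed.

Lemma Phi_neg N h eps V : Phi N h eps (negV V) = negV (Phi N h eps V).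
Proof. extensionality k. unfold negV at 2. destruct (Nat.ltb k N) eqn:E.
 - apply Nat.ltb_lt in E. rewrite !Phi_lt by auto.
   change (negV V k) with (- V k). rewrite mean_neg.
   rewrite <- clip_neg. f_equal. ring.
 - unfold Phi; rewrite E; ring. Qed.

Lemma iter_neg N h eps V n : Nat.iter n (Phi N h eps) (negV V) = negV (Nat.iter n (Phi N h eps) V).
Proof. induction n; simpl; [reflexivity|]. rewrite IHn. apply Phi_neg. Qed.

Lemma nat_arch r : exists j : nat, r < INR j.
Proof. destruct (Rlt_le_dec r 0). - exists 0%nat; simpl; lra.
 - destruct (archimed r) as [H _]. exists (Z.to_nat (up r)).
   rewrite INR_IZR_INZ, Z2Nat.id; [lra|]. apply le_IZR; lra. Qed.

Lemma iter_S N h eps V n : Nat.iter (S n) (Phi N h eps) V = Phi N h eps (Nat.iter n (Phi N h eps) V).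
Proof. reflexivity. Qed.

Lemma iter_cube N h eps V : in_cube N V -> forall n k, (k < N)%nat ->
  -1 <= Nat.iter n (Phi N h eps) V k <= 1.
Proof. intros HV n k Hk. destruct n; [apply HV; auto|]. rewrite iter_S. apply Phi_cube; auto. Qed.

Lemma in_cube_neg N V : in_cube N V -> in_cube N (negV V).
Proof. intros H k Hk. unfold negV. specialize (H k Hk). lra. Qed.

Lemma mean_big N eps V k : 0 < eps -> (k < N)%nat -> eps <= V k ->
  eps / INR N <= mean N eps V (V k).
Proof. intros He Hk HVk.
 assert (HN : 0 < INR N) by (apply lt_0_INR; lia).
 pose proof (Cw_ge1 N eps V k ltac:(lra) Hk). pose proof (Cw_le N eps V (V k)).
 assert (HS : V k <= Sw N eps V (V k)).
 { unfold Sw. assert (ind (win eps V (V k) k) * V k = V k).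
   { assert (win eps V (V k) k = true) by (apply win_true; lra). rewrite H1; simpl; ring. }
   rewrite <- H1 at 1. apply (sumN_term N (fun l => ind (win eps V (V k) l) * V l)); auto.
   intros i Hi. destruct (win eps V (V k) i) eqn:E; simpl; [|lra].
   apply win_true in E. lra. }
 unfold mean. apply div_le_cross; try lra. nra. Qed.

Lemma step_big N h eps V k : 0 < h -> 0 < eps <= 1/2 -> (k < N)%nat -> eps <= V k <= 1 ->
  eps <= Phi N h eps V k /\ (Phi N h eps V k = 1 \/ V k + h * (eps / INR N) <= Phi N h eps V k).
Proof. intros Hh He Hk HV. rewrite Phi_lt by auto.
 pose proof (mean_big N eps V k ltac:(lra) Hk ltac:(lra)).
 assert (HN : 0 < INR N) by (apply lt_0_INR; lia).
 assert (0 < eps / INR N) by (apply Rdiv_lt_0_compat; lra).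
 assert (h * (eps / INR N) <= h * mean N eps V (V k)) by (apply Rmult_le_compat_l; lra).
 assert (0 < h * (eps / INR N)) by (apply Rmult_lt_0_compat; lra).
 unfold clip. repeat destruct Rlt_dec; split; try lra; try (left; lra); right; lra. Qed.

Definition U N h eps V n := Nat.iter n (Phi N h eps) V.

Lemma reach_one N h eps V k n : 0 < h -> 0 < eps <= 1/2 -> in_cube N V -> (k < N)%nat ->
  eps <= U N h eps V n k -> exists T, forall m, (T <= m)%nat -> U N h eps V m k = 1.
Proof. intros Hh He HV Hk Hn.
 assert (HN : 0 < INR N) by (apply lt_0_INR; lia).
 set (c := h * (eps / INR N)).
 assert (Hc : 0 < c) by (unfold c; apply Rmult_lt_0_compat; [lra| apply Rdiv_lt_0_compat; lra]).
 assert (Hstay : forall m, eps <= U N h eps V m k -> eps <= U N h eps V (S m) k /\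
    (U N h eps V (S m) k = 1 \/ U N h eps V m k + c <= U N h eps V (S m) k)).
 { intros m Hm. unfold U; rewrite iter_S. apply step_big; auto.
   pose proof (iter_cube N h eps V HV m k Hk). split; [exact Hm| apply H]. }
 assert (Hone : forall m, U N h eps V m k = 1 -> U N h eps V (S m) k = 1).
 { intros m Hm. destruct (Hstay m) as [_ [H|H]]; [lra|auto|].
   pose proof (iter_cube N h eps V HV (S m) k Hk). unfold U in *; lra. }
 assert (Hj : forall j, eps <= U N h eps V (n + j) k /\
    (U N h eps V (n + j) k = 1 \/ U N h eps V n k + INR j * c <= U N h eps V (n + j) k)).
 { induction j. - rewrite Nat.add_0_r; simpl; split; [auto| right; lra].
   - destruct IHj as [H1 H2]. replace (n + S j)%nat with (S (n + j)) by lia.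
     destruct (Hstay _ H1) as [H3 H4]. split; auto. rewrite S_INR.
     destruct H2 as [H2|H2]; [left; apply Hone; auto|].
     destruct H4; [left; auto| right; lra]. }
 destruct (nat_arch (2 / c)) as [j Hj2].
 assert (HjC : 2 < INR j * c).
 { apply (Rmult_lt_compat_r c) in Hj2; auto. unfold Rdiv in Hj2. rewrite Rmult_assoc, Rinv_l in Hj2; lra. }
 assert (Hreach : U N h eps V (n + j) k = 1).
 { destruct (Hj j) as [_ [H|H]]; auto.
   pose proof (iter_cube N h eps V HV (n + j) k Hk). pose proof (iter_cube N h eps V HV n k Hk).
   unfold U in *; lra. }
 exists (n + j)%nat. intros m Hm. replace m with ((n + j) + (m - (n + j)))%nat by lia.
 generalize (m - (n + j))%nat. induction n0. - rewrite Nat.add_0_r; auto.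
 - replace (n + j + S n0)%nat with (S (n + j + n0)) by lia. apply Hone; auto. Qed.

Lemma U_neg N h eps V n k : U N h eps (negV V) n k = - U N h eps V n k.
Proof. unfold U. rewrite iter_neg. reflexivity. Qed.

Lemma reach_mone N h eps V k n : 0 < h -> 0 < eps <= 1/2 -> in_cube N V -> (k < N)%nat ->
  U N h eps V n k <= - eps -> exists T, forall m, (T <= m)%nat -> U N h eps V m k = -1.
Proof. intros Hh He HV Hk Hn.
 destruct (reach_one N h eps (negV V) k n Hh He (in_cube_neg N V HV) Hk) as [T HT].
 - rewrite U_neg; lra.
 - exists T; intros m Hm. specialize (HT m Hm). rewrite U_neg in HT. lra. Qed.

Definition Ev N h eps V T k :=
  (forall n, (T <= n)%nat -> U N h eps V n k = 1) \/
  (forall n, (T <= n)%nat -> U N h eps V n k = -1) \/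
  (forall n, - eps < U N h eps V n k < eps).

Lemma Ev_mono N h eps V T T' k : (T <= T')%nat -> Ev N h eps V T k -> Ev N h eps V T' k.
Proof. intros HT [H|[H|H]]; [left|right;left|right;right]; auto; intros n Hn; apply H; lia. Qed.

Lemma classify N h eps V k : 0 < h -> 0 < eps <= 1/2 -> in_cube N V -> (k < N)%nat ->
  exists T, Ev N h eps V T k.
Proof. intros Hh He HV Hk.
 destruct (classic (exists n, eps <= U N h eps V n k)) as [[n Hn]|H1].
 { destruct (reach_one N h eps V k n Hh He HV Hk Hn) as [T HT]. exists T; left; auto. }
 destruct (classic (exists n, U N h eps V n k <= - eps)) as [[n Hn]|H2].
 { destruct (reach_mone N h eps V k n Hh He HV Hk Hn) as [T HT]. exists T; right; left; auto. }
 exists 0%nat; right; right. intros n.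
 destruct (Rlt_le_dec (U N h eps V n k) eps); [|exfalso; apply H1; eauto].
 destruct (Rlt_le_dec (- eps) (U N h eps V n k)); [lra|exfalso; apply H2; eauto]. Qed.

Lemma common_T (E : nat -> nat -> Prop) N :
  (forall k, (k < N)%nat -> exists T, E T k) ->
  (forall T T' k, (T <= T')%nat -> E T k -> E T' k) ->
  exists T, forall k, (k < N)%nat -> E T k.
Proof. intros H Hm. induction N.
 - exists 0%nat; intros; lia.
 - destruct IHN as [T1 HT1]. { intros; apply H; lia. }
   destruct (H N ltac:(lia)) as [T2 HT2]. exists (Nat.max T1 T2). intros k Hk.
   destruct (Nat.eq_dec k N) as [->|].
   + apply (Hm T2); [lia|auto].
   + apply (Hm T1); [lia| apply HT1; lia]. Qed.

Definition Setting N h eps (V : nat -> R) :=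
  forall k, (k < N)%nat ->
    (-eps < V k < eps /\ -eps < Phi N h eps V k < eps) \/
    (V k = 1 /\ Phi N h eps V k = 1) \/ (V k = -1 /\ Phi N h eps V k = -1).

Definition mV N eps V := fun l => mean N eps V (V l).

Definition avgW N eps (W : nat -> R) (x : R) (f : nat -> R) :=
  sumN N (fun l => ind (win eps W x l) * f l) / Cw N eps W x.

Lemma avg_ge N eps W x f a : 0 < Cw N eps W x ->
  (forall l, (l < N)%nat -> win eps W x l = true -> a <= f l) -> a <= avgW N eps W x f.
Proof. intros HC H. unfold avgW. apply (Rmult_le_reg_r (Cw N eps W x)); auto.
 unfold Rdiv. rewrite Rmult_assoc, Rinv_l, Rmult_1_r by lra. unfold Cw.
 rewrite <- sumN_scal. apply sumN_le; intros l Hl. destruct (win eps W x l) eqn:E; simpl.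
 - specialize (H l Hl E); lra. - lra. Qed.

Lemma avg_le N eps W x f a : 0 < Cw N eps W x ->
  (forall l, (l < N)%nat -> win eps W x l = true -> f l <= a) -> avgW N eps W x f <= a.
Proof. intros HC H. unfold avgW. apply (Rmult_le_reg_r (Cw N eps W x)); auto.
 unfold Rdiv. rewrite Rmult_assoc, Rinv_l, Rmult_1_r by lra. unfold Cw.
 rewrite <- sumN_scal. apply sumN_le; intros l Hl. destruct (win eps W x l) eqn:E; simpl.
 - specialize (H l Hl E); lra. - lra. Qed.

Lemma Cw_pos N eps V k : 0 <= eps -> (k < N)%nat -> 0 < Cw N eps V (V k).
Proof. intros; pose proof (Cw_ge1 N eps V k H H0); lra. Qed.


Lemma Setting_mid N h eps V l : 0 < eps <= 1/2 -> Setting N h eps V -> (l < N)%nat ->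
  (-1 < V l < 1 \/ -1 < Phi N h eps V l < 1) -> -eps < V l < eps /\ -eps < Phi N h eps V l < eps.
Proof. intros He HS Hl H. destruct (HS l Hl) as [H1|[H1|H1]]; auto; lra. Qed.

Lemma lin_mid N h eps V l : (l < N)%nat -> -eps < Phi N h eps V l < eps -> eps <= 1/2 ->
  Phi N h eps V l = V l + h * mV N eps V l.
Proof. intros Hl H He. unfold mV. pose proof H as H'. rewrite Phi_lt in H' |- * by auto. apply clip_open. lra. Qed.

Lemma top_step N h eps V t : 0 < h < 1 -> 0 < eps <= 1/2 -> Setting N h eps V -> (t < N)%nat ->
  -eps < V t < eps ->
  (forall k, (k < N)%nat -> -eps < V k < eps -> V k <= V t) ->
  mean N eps V (V t) + h * avgW N eps (Phi N h eps V) (Phi N h eps V t) (mV N eps V)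
  <= mean N eps (Phi N h eps V) (Phi N h eps V t).
Proof.
  intros Hh He HS Ht Hmt Htop.
  set (V' := Phi N h eps V).
  assert (Ht' : -eps < V' t < eps) by (destruct (HS t Ht) as [H|[H|H]]; unfold V'; lra).
  assert (HW' : forall l, (l < N)%nat -> win eps V' (V' t) l = true ->
             -eps < V l < eps /\ -eps < V' l < eps).
  { intros l Hl Hw. apply win_true in Hw. apply Setting_mid; auto. right. unfold V' in *; lra. }
  assert (HW : forall l, (l < N)%nat -> win eps V (V t) l = true ->
             -eps < V l < eps /\ -eps < V' l < eps).
  { intros l Hl Hw. apply win_true in Hw. apply Setting_mid; auto. left. lra. }
  assert (Hlin : forall l, (l < N)%nat -> -eps < V' l < eps -> V' l = V l + h * mV N eps V l).
  { intros; apply lin_mid; auto; lra. }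
  assert (Hmono : forall l, (l < N)%nat -> -eps < V l < eps -> mV N eps V l <= mV N eps V t).
  { intros l Hl Hm. apply mean_mono_k; auto; lra. }
  assert (Hsub : forall l, (l < N)%nat -> win eps V' (V' t) l = true -> win eps V (V t) l = true).
  { intros l Hl Hw. destruct (HW' l Hl Hw) as [Hm1 Hm2]. pose proof (Htop l Hl Hm1).
    pose proof (Hmono l Hl Hm1). apply win_true in Hw.
    destruct (win eps V (V t) l) eqn:E; auto. apply win_false in E.
    rewrite (Hlin l Hl Hm2), (Hlin t Ht Ht') in Hw.
    assert (h * mV N eps V l <= h * mV N eps V t) by (apply Rmult_le_compat_l; lra). lra. }
  assert (HC : 0 < Cw N eps V (V t)) by (apply Cw_pos; auto; lra).
  assert (HC' : 0 < Cw N eps V' (V' t)) by (apply Cw_pos; auto; lra).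
  assert (Hpair : sumN N (fun l => ind (win eps V (V t) l) * V l) * sumN N (fun l => ind (win eps V' (V' t) l))
       <= sumN N (fun l => ind (win eps V' (V' t) l) * V l) * sumN N (fun l => ind (win eps V (V t) l))).
  { apply pair_lemma. intros l l' Hl Hl' H1 H2 H3.
    assert (H4 : win eps V' (V' t) l' = false).
    { destruct (win eps V' (V' t) l') eqn:E; auto. exfalso; apply H3; split; auto. }
    destruct (HW l' Hl' H2) as [Hm1 Hm2].
    assert (V' l' <= V' t) by (apply Phi_mono; auto; lra).
    apply win_false in H4. apply win_true in H1.
    left. apply (Phi_lt_inv N h eps V); auto; try lra. fold V'. lra. }
  assert (Havg : mean N eps V (V t) <= avgW N eps V' (V' t) V).
  { unfold mean, avgW, Sw. apply div_le_cross; auto. }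
  assert (Hsplit : mean N eps V' (V' t) = avgW N eps V' (V' t) V + h * avgW N eps V' (V' t) (mV N eps V)).
  { unfold mean, avgW, Sw.
    replace (sumN N (fun l => ind (win eps V' (V' t) l) * V' l)) with
      (sumN N (fun l => ind (win eps V' (V' t) l) * V l) + h * sumN N (fun l => ind (win eps V' (V' t) l) * mV N eps V l)).
    - field; lra.
    - rewrite <- sumN_scal, <- sumN_plus. apply sumN_ext; intros l Hl.
      destruct (win eps V' (V' t) l) eqn:E; simpl; [|ring].
      rewrite (Hlin l Hl); [ring|]. apply HW'; auto. }
  lra.
Qed.

Lemma avgW_neg N eps W x f : avgW N eps (negV W) (- x) (fun l => - f l) = - avgW N eps W x f.
Proof. unfold avgW, Cw. rewrite win_neg.
 replace (sumN N (fun l => ind (win eps W x l) * - f l)) with (- sumN N (fun l => ind (win eps W x l) * f l)).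
 - unfold Rdiv; ring.
 - rewrite <- (Rmult_1_l (sumN _ _)). rewrite Ropp_mult_distr_l, <- sumN_scal. apply sumN_ext; intros; ring. Qed.

Lemma mV_neg N eps V : mV N eps (negV V) = fun l => - mV N eps V l.
Proof. extensionality l. unfold mV. change (negV V l) with (- V l). apply mean_neg. Qed.

Lemma Setting_neg N h eps V : Setting N h eps V -> Setting N h eps (negV V).
Proof. intros HS k Hk. rewrite Phi_neg. unfold negV. destruct (HS k Hk) as [H|[H|H]]; lra. Qed.

Lemma bot_step N h eps V b : 0 < h < 1 -> 0 < eps <= 1/2 -> Setting N h eps V -> (b < N)%nat ->
  -eps < V b < eps ->
  (forall k, (k < N)%nat -> -eps < V k < eps -> V b <= V k) ->
  mean N eps (Phi N h eps V) (Phi N h eps V b) <=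
  mean N eps V (V b) + h * avgW N eps (Phi N h eps V) (Phi N h eps V b) (mV N eps V).
Proof.
  intros Hh He HS Hb Hmb Hbot.
  pose proof (top_step N h eps (negV V) b Hh He (Setting_neg N h eps V HS) Hb) as H.
  rewrite Phi_neg, mV_neg in H.
  assert (E1 : mean N eps (negV V) (negV V b) = - mean N eps V (V b)) by (apply mean_neg).
  assert (E2 : mean N eps (negV (Phi N h eps V)) (negV (Phi N h eps V) b) = - mean N eps (Phi N h eps V) (Phi N h eps V b)) by (apply mean_neg).
  assert (E3 : avgW N eps (negV (Phi N h eps V)) (negV (Phi N h eps V) b) (fun l => - mV N eps V l) = - avgW N eps (Phi N h eps V) (Phi N h eps V b) (mV N eps V)) by (apply avgW_neg).
  rewrite E1, E2, E3 in H. unfold negV in H.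
  assert (H' : - mean N eps V (V b) + h * - avgW N eps (Phi N h eps V) (Phi N h eps V b) (mV N eps V)
     <= - mean N eps (Phi N h eps V) (Phi N h eps V b)).
  { apply H; [lra|]. intros k Hk Hm. specialize (Hbot k Hk ltac:(lra)). lra. }
  lra.
Qed.

Lemma avg_bounds N h eps V s b t : 0 < h < 1 -> 0 < eps <= 1/2 -> Setting N h eps V ->
  (s < N)%nat -> (b < N)%nat -> (t < N)%nat -> -eps < V s < eps ->
  (forall k, (k < N)%nat -> -eps < V k < eps -> V b <= V k <= V t) ->
  mV N eps V b <= avgW N eps (Phi N h eps V) (Phi N h eps V s) (mV N eps V) <= mV N eps V t.
Proof.
  intros Hh He HS Hs Hb Ht Hms Hbt.
  set (V' := Phi N h eps V).
  assert (Hs' : -eps < V' s < eps) by (destruct (HS s Hs) as [H|[H|H]]; unfold V'; lra).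
  assert (HW' : forall l, (l < N)%nat -> win eps V' (V' s) l = true -> -eps < V l < eps).
  { intros l Hl Hw. apply win_true in Hw. assert (Hx : -1 < Phi N h eps V l < 1) by (unfold V' in *; lra).
    exact (proj1 (Setting_mid N h eps V l He HS Hl (or_intror Hx))). }
  assert (HC' : 0 < Cw N eps V' (V' s)) by (apply Cw_pos; auto; lra).
  split.
  - apply avg_ge; auto. intros l Hl Hw. specialize (HW' l Hl Hw). apply mean_mono_k; auto; try lra.
    apply Hbt; auto.
  - apply avg_le; auto. intros l Hl Hw. specialize (HW' l Hl Hw). apply mean_mono_k; auto; try lra.
    apply Hbt; auto.
Qed.

Lemma AB N h eps V b t : 0 < h < 1 -> 0 < eps <= 1/2 -> Setting N h eps V ->
  (b < N)%nat -> (t < N)%nat -> -eps < V b < eps -> -eps < V t < eps ->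
  (forall k, (k < N)%nat -> -eps < V k < eps -> V b <= V k <= V t) ->
  avgW N eps (Phi N h eps V) (Phi N h eps V b) (mV N eps V) <=
  avgW N eps (Phi N h eps V) (Phi N h eps V t) (mV N eps V).
Proof.
  intros Hh He HS Hb Ht Hmb Hmt Hbt.
  set (V' := Phi N h eps V).
  assert (Hb' : -eps < V' b < eps) by (destruct (HS b Hb) as [H|[H|H]]; unfold V'; lra).
  assert (Ht' : -eps < V' t < eps) by (destruct (HS t Ht) as [H|[H|H]]; unfold V'; lra).
  assert (HWt : forall l, (l < N)%nat -> win eps V' (V' t) l = true -> -eps < V l < eps).
  { intros l Hl Hw. apply win_true in Hw. assert (Hx : -1 < Phi N h eps V l < 1) by (unfold V' in *; lra).
    exact (proj1 (Setting_mid N h eps V l He HS Hl (or_intror Hx))). }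
  assert (HWb : forall l, (l < N)%nat -> win eps V' (V' b) l = true -> -eps < V l < eps).
  { intros l Hl Hw. apply win_true in Hw. assert (Hx : -1 < Phi N h eps V l < 1) by (unfold V' in *; lra).
    exact (proj1 (Setting_mid N h eps V l He HS Hl (or_intror Hx))). }
  assert (HCt : 0 < Cw N eps V' (V' t)) by (apply Cw_pos; auto; lra).
  assert (HCb : 0 < Cw N eps V' (V' b)) by (apply Cw_pos; auto; lra).
  unfold avgW. apply div_le_cross; auto. unfold Cw.
  apply pair_lemma. intros l l' Hl Hl' H1 H2 H3.
  pose proof (HWt l Hl H1) as Hm. pose proof (HWb l' Hl' H2) as Hm'.
  assert (V' l' <= V' t) by (apply Phi_mono; auto; try lra; apply Hbt; auto).
  assert (V' b <= V' l) by (apply Phi_mono; auto; try lra; apply Hbt; auto).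
  assert (Hlt : V l' < V l).
  { apply (Phi_lt_inv N h eps V); auto; try lra. fold V'.
    apply win_true in H1. apply win_true in H2.
    destruct (win eps V' (V' t) l') eqn:E1.
    - destruct (win eps V' (V' b) l) eqn:E2. + exfalso; auto.
      + apply win_false in E2; lra.
    - apply win_false in E1; lra. }
  apply mean_mono_k; auto; lra.
Qed.

Lemma no_growth (z : nat -> R) c B : 0 < c -> (forall j, z j + c <= z (S j)) -> (forall j, z j <= B) -> False.
Proof. intros Hc Hz HB.
 assert (H : forall j, z 0%nat + INR j * c <= z j).
 { induction j; [simpl; lra|]. rewrite S_INR. specialize (Hz j). lra. }
 destruct (nat_arch ((B - z 0%nat) / c)) as [j Hj].
 apply (Rmult_lt_compat_r c) in Hj; auto. unfold Rdiv in Hj. rewrite Rmult_assoc, Rinv_l in Hj by lra.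
 specialize (H j); specialize (HB j). lra. Qed.

Lemma seq_arg (x y mt mb : nat -> R) h eps : 0 < h -> 0 < eps ->
 (forall n, exists A B, mt n + h * A <= mt (S n) /\ mb (S n) <= mb n + h * B /\ B <= A /\ mb n <= A /\ B <= mt n) ->
 (forall n, mb n <= mt n) ->
 (forall n, x (S n) = x n + h * mt n) -> (forall n, y (S n) = y n + h * mb n) ->
 (forall n, -eps < x n < eps) -> (forall n, -eps < y n < eps) ->
 mt 0%nat = 0 /\ mb 0%nat = 0.
Proof.
 intros Hh He Hs Hbt Hx Hy Bx By.
 assert (Hg : forall n, mt n - mb n <= mt (S n) - mb (S n)).
 { intros n. destruct (Hs n) as (A & B & H1 & H2 & H3 & _).
   assert (h * B <= h * A) by (apply Rmult_le_compat_l; lra). lra. }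
 assert (Hg0 : forall n, mt n = mb n).
 { intros n0. destruct (Rle_lt_dec (mt n0 - mb n0) 0) as [H|H]; [specialize (Hbt n0); lra|].
   exfalso.
   assert (Hgj : forall j, mt n0 - mb n0 <= mt (n0 + j)%nat - mb (n0 + j)%nat).
   { induction j; [rewrite Nat.add_0_r; lra|]. replace (n0 + S j)%nat with (S (n0 + j)) by lia.
     specialize (Hg (n0 + j)%nat). lra. }
   apply (no_growth (fun j => x (n0 + j)%nat - y (n0 + j)%nat) (h * (mt n0 - mb n0)) (2 * eps)).
   - apply Rmult_lt_0_compat; lra.
   - intros j. replace (n0 + S j)%nat with (S (n0 + j)) by lia. rewrite Hx, Hy.
     specialize (Hgj j). assert (h * (mt n0 - mb n0) <= h * (mt (n0 + j)%nat - mb (n0 + j)%nat))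
       by (apply Rmult_le_compat_l; lra). lra.
   - intros j. specialize (Bx (n0 + j)%nat); specialize (By (n0 + j)%nat). lra. }
 destruct (Rtotal_order (mt 0%nat) 0) as [Hn|[Hz|Hp]].
 - exfalso.
   assert (Hm : forall n, mb n <= mb 0%nat).
   { induction n; [lra|]. destruct (Hs n) as (A & B & H1 & H2 & H3 & H4 & H5).
     rewrite (Hg0 n) in H5. rewrite <- (Hg0 0%nat) in IHn.
     assert (h * B <= h * mb n) by (apply Rmult_le_compat_l; lra).
     assert (h * mb n <= 0) by nra. rewrite <- (Hg0 0%nat). lra. }
   rewrite (Hg0 0%nat) in Hn.
   apply (no_growth (fun j => - y j) (- (h * mb 0%nat)) eps).
   + nra.
   + intros j. rewrite Hy. specialize (Hm j). assert (h * mb j <= h * mb 0%nat) by (apply Rmult_le_compat_l; lra). lra.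
   + intros j. specialize (By j). lra.
 - split; auto. rewrite <- Hg0; auto.
 - exfalso.
   assert (Hm : forall n, mt 0%nat <= mt n).
   { induction n; [lra|]. destruct (Hs n) as (A & B & H1 & H2 & H3 & H4 & H5).
     rewrite <- (Hg0 n) in H4.
     assert (h * mt n <= h * A) by (apply Rmult_le_compat_l; lra).
     assert (0 <= h * mt n) by nra. lra. }
   apply (no_growth x (h * mt 0%nat) eps).
   + nra.
   + intros j. rewrite Hx. specialize (Hm j). assert (h * mt 0%nat <= h * mt j) by (apply Rmult_le_compat_l; lra). lra.
   + intros j. specialize (Bx j). lra.
Qed.

Lemma fin_argmax (P : nat -> Prop) (f : nat -> R) N : (exists k, (k < N)%nat /\ P k) ->
  exists t, (t < N)%nat /\ P t /\ forall k, (k < N)%nat -> P k -> f k <= f t.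
Proof. induction N; intros [k [Hk Pk]]; [lia|].
 destruct (classic (exists k, (k < N)%nat /\ P k)) as [Hex|Hno].
 - destruct (IHN Hex) as [t [Ht [Pt Hmax]]].
   destruct (classic (P N)) as [PN|PN].
   + destruct (Rle_lt_dec (f N) (f t)).
     * exists t; repeat split; auto. intros j Hj Pj. destruct (Nat.eq_dec j N) as [->|]; auto. apply Hmax; auto; lia.
     * exists N; repeat split; auto. intros j Hj Pj. destruct (Nat.eq_dec j N) as [->|]; [lra|].
       specialize (Hmax j ltac:(lia) Pj). lra.
   + exists t; repeat split; auto. intros j Hj Pj. destruct (Nat.eq_dec j N) as [->|]; [contradiction|]. apply Hmax; auto; lia.
 - assert (k = N) by (destruct (Nat.eq_dec k N); auto; exfalso; apply Hno; exists k; split; auto; lia).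
   subst. exists N; repeat split; auto. intros j Hj Pj. destruct (Nat.eq_dec j N) as [->|]; [lra|].
   exfalso; apply Hno; exists j; split; auto; lia. Qed.

Lemma Phi_ext N h eps V W : (forall l, (l < N)%nat -> V l = W l) -> forall k, Phi N h eps V k = Phi N h eps W k.
Proof. intros H k. destruct (Nat.ltb k N) eqn:E.
 - apply Nat.ltb_lt in E. rewrite !Phi_lt by auto. rewrite (H k E). f_equal. f_equal. f_equal.
   assert (Hw : forall l, (l < N)%nat -> win eps V (W k) l = win eps W (W k) l).
   { intros l Hl. unfold win. rewrite (H l Hl). reflexivity. }
   unfold mean, Sw, Cw. f_equal; apply sumN_ext; intros l Hl; rewrite Hw by auto; auto.
   rewrite H; auto.
 - unfold Phi; rewrite E; reflexivity. Qed.

Lemma U_S N h eps V n : U N h eps V (S n) = Phi N h eps (U N h eps V n).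
Proof. reflexivity. Qed.

Lemma eventually_fixed N h eps V0 : 0 < h < 1 -> 0 < eps <= 1/2 -> in_cube N V0 ->
  exists T, forall k, (k < N)%nat -> U N h eps V0 (S T) k = U N h eps V0 T k.
Proof.
  intros Hh He HV.
  destruct (common_T (Ev N h eps V0) N) as [T HT].
  { intros k Hk. apply classify; auto; lra. }
  { intros; eapply Ev_mono; eauto. }
  set (Mid := fun k => forall n, - eps < U N h eps V0 n k < eps).
  assert (HMid : forall n k, (T <= n)%nat -> (k < N)%nat -> - eps < U N h eps V0 n k < eps -> Mid k).
  { intros n k Hn Hk Hm. destruct (HT k Hk) as [H|[H|H]]; auto.
    - specialize (H n Hn); lra. - specialize (H n Hn); lra. }
  assert (HSet : forall n, (T <= n)%nat -> Setting N h eps (U N h eps V0 n)).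
  { intros n Hn k Hk. rewrite <- U_S. destruct (HT k Hk) as [H|[H|H]].
    - right; left; split; apply H; lia.
    - right; right; split; apply H; lia.
    - left; split; apply H. }
  exists T. intros k Hk.
  destruct (HT k Hk) as [H|[H|H]].
  { rewrite !H; auto. }
  { rewrite !H; auto. }
  assert (Hex : exists k, (k < N)%nat /\ Mid k) by (exists k; split; auto).
  destruct (fin_argmax Mid (U N h eps V0 T) N Hex) as [t [Ht [Mt Htop]]].
  destruct (fin_argmax Mid (fun k => - U N h eps V0 T k) N Hex) as [b [Hb [Mb Hbot]]].
  assert (Hord : forall n, (T <= n)%nat -> forall j, (j < N)%nat -> Mid j ->
     U N h eps V0 n b <= U N h eps V0 n j <= U N h eps V0 n t).
  { intros n Hn. induction Hn; intros j Hj Mj.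
    - specialize (Htop j Hj Mj); specialize (Hbot j Hj Mj); simpl in Hbot; lra.
    - specialize (IHHn j Hj Mj). rewrite U_S. split; apply Phi_mono; auto; lra. }
  set (x := fun j => U N h eps V0 (T + j) t).
  set (y := fun j => U N h eps V0 (T + j) b).
  set (mt := fun j => mV N eps (U N h eps V0 (T + j)) t).
  set (mb := fun j => mV N eps (U N h eps V0 (T + j)) b).
  assert (Hlin : forall j l, (l < N)%nat -> Mid l ->
     U N h eps V0 (T + S j) l = U N h eps V0 (T + j) l + h * mV N eps (U N h eps V0 (T + j)) l).
  { intros j l Hl Ml. replace (T + S j)%nat with (S (T + j)) by lia. rewrite U_S.
    apply lin_mid; auto; try lra. rewrite <- U_S. apply Ml. }
  assert (Hord' : forall j l, (l < N)%nat -> - eps < U N h eps V0 (T + j) l < eps ->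
     U N h eps V0 (T + j) b <= U N h eps V0 (T + j) l <= U N h eps V0 (T + j) t).
  { intros j l Hl Hm. apply Hord; auto; [lia|]. apply (HMid (T + j)%nat); auto; lia. }
  destruct (seq_arg x y mt mb h eps) as [Hmt0 Hmb0]; try lra.
  - intros j. set (Vj := U N h eps V0 (T + j)).
    assert (HS : Setting N h eps Vj) by (apply HSet; lia).
    exists (avgW N eps (Phi N h eps Vj) (Phi N h eps Vj t) (mV N eps Vj)).
    exists (avgW N eps (Phi N h eps Vj) (Phi N h eps Vj b) (mV N eps Vj)).
    assert (Hmt : - eps < Vj t < eps) by apply Mt.
    assert (Hmb : - eps < Vj b < eps) by apply Mb.
    assert (Hbt : forall l, (l < N)%nat -> - eps < Vj l < eps -> Vj b <= Vj l <= Vj t) by (intros; apply Hord'; auto).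
    unfold mt, mb. replace (T + S j)%nat with (S (T + j)) by lia. rewrite !U_S. fold Vj.
    pose proof (top_step N h eps Vj t Hh He HS Ht Hmt ltac:(intros; apply Hbt; auto)).
    pose proof (bot_step N h eps Vj b Hh He HS Hb Hmb ltac:(intros; apply Hbt; auto)).
    pose proof (AB N h eps Vj b t Hh He HS Hb Ht Hmb Hmt Hbt).
    pose proof (avg_bounds N h eps Vj t b t Hh He HS Ht Hb Ht Hmt Hbt).
    pose proof (avg_bounds N h eps Vj b b t Hh He HS Hb Hb Ht Hmb Hbt).
    unfold mV in *. repeat split; try lra.
  - intros j. unfold mt, mb. apply mean_mono_k; try lra; auto; try (apply Hord'; auto; apply Mb).
  - intros j. unfold x, mt. apply Hlin; auto.
  - intros j. unfold y, mb. apply Hlin; auto.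
  - intros j; apply Mt.
  - intros j; apply Mb.
  - unfold mt, mb in Hmt0, Hmb0. rewrite Nat.add_0_r in Hmt0, Hmb0.
    assert (Hk0 : mV N eps (U N h eps V0 T) k = 0).
    { pose proof (Hord' 0%nat k Hk) as Ho. rewrite Nat.add_0_r in Ho. specialize (Ho (H T)).
      assert (mV N eps (U N h eps V0 T) b <= mV N eps (U N h eps V0 T) k) by (apply mean_mono_k; auto; lra).
      assert (mV N eps (U N h eps V0 T) k <= mV N eps (U N h eps V0 T) t) by (apply mean_mono_k; auto; lra).
      lra. }
    rewrite U_S, Phi_lt by auto. fold (mV N eps (U N h eps V0 T) k). rewrite Hk0, Rmult_0_r, Rplus_0_r.
    apply clip_id. specialize (H T); lra.
Qed.

Theorem theorem4 (N : nat) (h eps : R) (V0 : nat -> R) :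
  (1 <= N)%nat -> 0 < h < 1 -> 0 < eps <= 1 / 2 ->
  in_cube N V0 -> nondecreasing_vec N V0 ->
  exists Vstar : nat -> R,
    (forall k, (k < N)%nat ->
       Un_cv (fun n => Nat.iter n (Phi N h eps) V0 k) (Vstar k)) /\
    (forall k, (k < N)%nat -> Phi N h eps Vstar k = Vstar k).
Proof.
  intros HN Hh He HV _.
  destruct (eventually_fixed N h eps V0 Hh He HV) as [T HT].
  assert (Hc : forall n, (T <= n)%nat -> forall k, (k < N)%nat -> U N h eps V0 n k = U N h eps V0 T k).
  { intros n Hn. induction Hn; intros k Hk; auto.
    rewrite U_S. rewrite (Phi_ext N h eps _ (U N h eps V0 T) IHHn). rewrite <- U_S. auto. }
  exists (U N h eps V0 T). split.
  - intros k Hk e He'. exists T. intros n Hn.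
    change (Nat.iter n (Phi N h eps) V0 k) with (U N h eps V0 n k).
    rewrite (Hc n Hn k Hk). unfold R_dist. rewrite Rminus_diag, Rabs_R0. lra.
  - intros k Hk. rewrite <- U_S. auto.
Qed.
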